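(* For every $f:\{0,1\}^n\to\{-1,1\}$, $$\mathbb E_{x,y}\sum_{\alpha,\beta\in\{0,1\}^n}\hat{f_x}^2(\alpha)\,\hat{f_y}^2(\beta)\,\widehat{f_{x+y}}^2(\alpha+\beta)=\mathbb E_y\sum_{\alpha\in\{0,1\}^n}\hat{f_y}^6(\alpha),$$ with $x,y$ independent uniform in $\{0,1\}^n$.
   Context: $\{0,1\}^n$ is identified with $\mathbb F_2^n$. $\hat h(\alpha)=\mathbb E_z h(z)(-1)^{\langle\alpha,z\rangle}$ with $\langle\alpha,z\rangle=\sum\alpha_iz_i\bmod 2$; $f_y(x)=f(x)f(x+y)$. *)

(* Defs.v *)
From mathcomp Require Import all_boot all_order all_algebra.
Set Implicit Arguments. Unset Strict Implicit. Unset Printing Implicit Defensive.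
Import Order.TTheory GRing.Theory Num.Theory.
Local Open Scope ring_scope.

Definition cube (n : nat) := {ffun 'I_n -> bool}.

Definition cadd n (x y : cube n) : cube n := [ffun i => xorb (x i) (y i)].

Definition cdot n (a z : cube n) : bool :=
  odd (\sum_(i < n) (a i && z i : nat)).

Definition chi n (a z : cube n) : rat := if cdot a z then -1 else 1.

Definition Ecube n (g : cube n -> rat) : rat :=
  (\sum_(z : cube n) g z) / (#|{: cube n}|)%:R.

Definition fourier n (h : cube n -> rat) (a : cube n) : rat :=
  Ecube (fun z => h z * chi a z).

Definition fder n (f : cube n -> rat) (y : cube n) : cube n -> rat :=
  fun x => f x * f (cadd x y).

(* Main.v *)
Require Import Defs.
From mathcomp Require Import all_boot all_order all_algebra.
From mathcomp Require Import ring lra.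
Import Order.TTheory GRing.Theory Num.Theory.
Local Open Scope ring_scope.
Set Implicit Arguments. Unset Strict Implicit.

Section S.
Variable n : nat.
Notation C := (cube n).
Definition c0 : C := [ffun _ => false].
Notation N := ((#|{: C}|)%:R : rat).

Lemma caddC (x y : C) : cadd x y = cadd y x.
Proof. by apply/ffunP=> i; rewrite !ffunE; case: (x i); case: (y i). Qed.
Lemma caddA (x y z : C) : cadd x (cadd y z) = cadd (cadd x y) z.
Proof. by apply/ffunP=> i; rewrite !ffunE; case: (x i); case: (y i); case: (z i). Qed.
Lemma caddK (u z : C) : cadd (cadd z u) u = z.
Proof. by apply/ffunP=> i; rewrite !ffunE; case: (z i); case: (u i). Qed.
Lemma caddKl (u z : C) : cadd u (cadd u z) = z.
Proof. by apply/ffunP=> i; rewrite !ffunE; case: (z i); case: (u i). Qed.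
Lemma cadd_inj (u : C) : injective (fun z : C => cadd u z).
Proof. by move=> a b /(congr1 (fun z : C => cadd u z)); rewrite !caddKl. Qed.
Lemma cadd_injr (u : C) : injective (fun z : C => cadd z u).
Proof. by move=> a b /(congr1 (fun z : C => cadd z u)); rewrite /= !caddK. Qed.
Lemma cadd_eq0 (v w : C) : (cadd v w == c0) = (v == w).
Proof.
apply/eqP/eqP=> [H|->]; last by apply/ffunP=> i; rewrite !ffunE; case: (w i).
apply/ffunP=> i; move/ffunP: H => /(_ i); rewrite !ffunE; by case: (v i); case: (w i).
Qed.

Lemma cdotC (a z : C) : cdot a z = cdot z a.
Proof. by rewrite /cdot; congr odd; apply: eq_bigr=> i _; rewrite andbC. Qed.

Lemma odd_sum (I : finType) (F : I -> nat) :
  odd (\sum_i F i) = \big[addb/false]_i odd (F i).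
Proof. exact: (big_morph odd oddD). Qed.

Lemma cdotD (a z w : C) : cdot a (cadd z w) = cdot a z (+) cdot a w.
Proof.
rewrite /cdot !odd_sum -big_split /=; apply: eq_bigr=> i _.
by rewrite ffunE; case: (a i); case: (z i); case: (w i).
Qed.

Lemma chiD (a z w : C) : chi a (cadd z w) = chi a z * chi a w.
Proof.
by rewrite /chi cdotD; case: (cdot a z); case: (cdot a w); rewrite /= ?mulrNN ?mulr1 ?mulN1r ?mul1r.
Qed.
Lemma chiC (a z : C) : chi a z = chi z a.
Proof. by rewrite /chi cdotC. Qed.
Lemma chi0 (a : C) : chi a c0 = 1.
Proof. by rewrite /chi /cdot big1 // => i _; rewrite ffunE andbF. Qed.
Lemma chi2 (a z : C) : chi a z * chi a z = 1.
Proof. by rewrite /chi; case: (cdot a z); rewrite ?mulrNN mulr1. Qed.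

Lemma ortho (u : C) : \sum_a chi a u = if u == c0 then N else 0.
Proof.
case: eqP=> [->|/eqP hu].
  by rewrite (eq_bigr (fun _ => 1)) ?sumr_const // => a _; rewrite chi0.
have [i hi] : exists i, u i.
  apply/existsP; apply: contraR hu => /existsPn H.
  by apply/eqP/ffunP=> j; rewrite ffunE; apply/negbTE.
pose e : C := [ffun j => j == i].
have he : chi e u = -1.
  rewrite /chi /cdot (bigD1 i) //= big1 ?addn0; first by rewrite ffunE eqxx hi.
  by move=> j /negbTE hj; rewrite ffunE hj.
set S := \sum_a _.
have : S = - S.
  rewrite {1}/S (reindex_inj (@cadd_injr e)) /S -mulN1r mulr_sumr.
  apply: eq_bigr=> a _ /=; rewrite chiC chiD -!(chiC u).
by rewrite (chiC u e) he mulrC.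
move=> H; lra.
Qed.

Lemma parseval (B D : C -> rat) :
  \sum_b (\sum_v B v * chi b v) * (\sum_w D w * chi b w)
  = N * \sum_w B w * D w.
Proof.
have E : forall b, (\sum_v B v * chi b v) * (\sum_w D w * chi b w)
    = \sum_v \sum_w (B v * D w) * chi b (cadd v w).
  move=> b; rewrite mulr_suml; apply: eq_bigr=> v _; rewrite mulr_sumr.
  by apply: eq_bigr=> w _; rewrite chiD; ring.
rewrite (eq_bigr _ (fun b _ => E b)) exchange_big /= mulr_sumr.
apply: eq_bigr=> v _; rewrite exchange_big /=.
under eq_bigr=> w _ do rewrite -mulr_sumr ortho cadd_eq0.
rewrite (bigD1 v) //= eqxx big1 ?addr0; first by rewrite mulrC.
by move=> w hw; rewrite eq_sym (negbTE hw) mulr0.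
Qed.

Lemma square (A : C -> rat) a :
  (\sum_z A z * chi a z) ^+ 2 = \sum_w (\sum_z A z * A (cadd z w)) * chi a w.
Proof.
rewrite expr2 mulr_suml.
under eq_bigr=> z _ do rewrite mulr_sumr (reindex_inj (@cadd_inj z)).
rewrite exchange_big /=; apply: eq_bigr=> w _; rewrite mulr_suml.
apply: eq_bigr=> z _; rewrite chiD.
have := chi2 a z; move: (chi a z) (chi a w) => p q h.
by rewrite -[RHS]mulr1 -h; ring.
Qed.

End S.

Lemma gen3 (c p q r : rat) : (c * p) * (c * q) * (c * r) = c ^+ 3 * (p * q * r).
Proof. ring. Qed.

Theorem lemma6p5 (n : nat) (f : cube n -> rat)
  (hf : forall x, f x = 1 \/ f x = -1) :
  Ecube (fun x => Ecube (fun y =>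
    \sum_(a : cube n) \sum_(b : cube n)
      (fourier (fder f x) a) ^+ 2 * (fourier (fder f y) b) ^+ 2
      * (fourier (fder f (cadd x y)) (cadd a b)) ^+ 2))
  = Ecube (fun y => \sum_(a : cube n) (fourier (fder f y) a) ^+ 6).
Proof.
set N : rat := (#|{: cube n}|)%:R.
have hN : N != 0.
  rewrite /N pnatr_eq0 -lt0n; apply/card_gt0P; by exists (c0 n).
pose P x w := \sum_z fder f x z * fder f x (cadd z w).
pose c := (N ^+ 2)^-1.
have hF : forall x a, fourier (fder f x) a ^+ 2 = c * \sum_w P x w * chi a w.
  by move=> x a; rewrite /fourier /Ecube expr_div_n square mulrC.
have hP : forall x w, P x w = P w x.
  move=> x w; apply: eq_bigr=> z _; rewrite /fder -!caddA (caddC x w); ring.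
have hX3 : forall y, \sum_a (\sum_w P y w * chi a w) ^+ 3
    = N * \sum_w \sum_z P y w * (P y z * P y (cadd z w)).
  move=> y; under eq_bigr=> a _ do rewrite exprS square.
  by rewrite parseval; congr (_ * _); apply: eq_bigr=> w _; rewrite mulr_sumr.
have hLin : forall x y, \sum_a \sum_b (\sum_w P x w * chi a w)
      * (\sum_w P y w * chi b w) * (\sum_w P (cadd x y) w * chi (cadd a b) w)
    = N * N * \sum_w P x w * (P y w * P (cadd x y) w).
  move=> x y.
  have E : forall a, \sum_b (\sum_w P x w * chi a w)
      * (\sum_w P y w * chi b w) * (\sum_w P (cadd x y) w * chi (cadd a b) w)
     = (\sum_w P x w * chi a w) *
       (N * \sum_w (P y w * P (cadd x y) w) * chi a w).
    move=> a.
    have H2 : \sum_w (P y w * P (cadd x y) w) * chi a w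
       = \sum_w P y w * (P (cadd x y) w * chi a w).
      by apply: eq_bigr=> w _; rewrite mulrA.
    rewrite H2.
    rewrite -parseval mulr_sumr; apply: eq_bigr=> b _.
    rewrite -mulrA; congr (_ * (_ * _)); apply: eq_bigr=> w _.
    by rewrite chiC chiD !(chiC w); ring.
  rewrite (eq_bigr _ (fun a _ => E a)).
  under eq_bigr=> a _ do rewrite mulrCA.
  by rewrite -mulr_sumr parseval mulrA.
have L : forall x y, \sum_a \sum_b
      (fourier (fder f x) a) ^+ 2 * (fourier (fder f y) b) ^+ 2
      * (fourier (fder f (cadd x y)) (cadd a b)) ^+ 2
    = c ^+ 3 * (N * N * \sum_w P x w * (P y w * P (cadd x y) w)).
  move=> x y; rewrite -hLin mulr_sumr; apply: eq_bigr=> a _.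
  rewrite mulr_sumr; apply: eq_bigr=> b _.
  by rewrite !hF gen3.
have R : forall y, \sum_a (fourier (fder f y) a) ^+ 6
    = c ^+ 3 * (N * \sum_w \sum_z P y w * (P y z * P y (cadd z w))).
  move=> y; rewrite -hX3 mulr_sumr; apply: eq_bigr=> a _.
  by rewrite -[6%N]/(2 * 3)%N exprM hF exprMn.
have key : \sum_x \sum_y \sum_w P x w * (P y w * P (cadd x y) w)
    = \sum_y \sum_w \sum_z P y w * (P y z * P y (cadd z w)).
  under eq_bigr=> x _ do rewrite exchange_big.
  rewrite exchange_big; apply: eq_bigr=> w _; apply: eq_bigr=> x _.
  apply: eq_bigr=> y _; rewrite !(hP _ w) (caddC y x).
  ring.
rewrite /Ecube.
under eq_bigr=> x _ do under eq_bigr=> y _ do rewrite L.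
rewrite [in RHS](eq_bigr _ (fun y _ => R y)).
rewrite -[in RHS]mulr_sumr.
under eq_bigr=> x _ do rewrite -mulr_sumr.
rewrite -mulr_suml -mulr_sumr.
under eq_bigr=> x _ do rewrite -mulr_sumr.
rewrite -[in LHS]mulr_sumr -[in RHS]mulr_sumr key.
rewrite -/N /c.
field.
by rewrite hN.
Qed.
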